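(* Let $\mathcal{G}$ be a network of type $\mathcal{C}^1$ with exactly two stubborn agents $s_1,s_2$, whose opinions evolve by the Friedkin–Johnsen model $\mathbf{x}(k+1)=(I-\beta)W\mathbf{x}(k)+\beta\mathbf{x}(0)$. Let $(a,b,d)$ be a permissible edge modification. Suppose there exists a global communicator $m$ of $\mathcal{G}$ such that, with the sets $\mathcal{T}_1,\dots,\mathcal{T}_4$ defined relative to $m$, the nodes $a$ and $d$ satisfy at least one of the following: (1) (equally neutral) $a\in\mathcal{T}_4$ and $d\in\mathcal{T}_4$; (2) (equally supportive) $a,d\in\mathcal{T}_1$ and every simple path from $m$ to $a$ and every simple path from $m$ to $d$ passes through $s_1$; or $a,d\in\mathcal{T}_2$ and every simple path from $m$ to $a$ and every simple path from $m$ to $d$ passes through $s_2$; (3) (equally connected) there is a node $c$ such that every simple path from $s_1$ or from $s_2$ to $a$ or to $d$ passes through $c$. Then $(a,b,d)$ is redundant, i.e. the influence centralities $c_{s_1}$ and $c_{s_2}$ are the same before and after the modification.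
   Context: Let $\mathcal{G}=(\mathcal{V},\mathcal{E})$, $\mathcal{V}=\{1,\dots,n\}$, be a directed graph, where an edge $(i,j)$ means information flows from $i$ to $j$. Its weighted adjacency matrix $W=[w_{ij}]$ is row-stochastic with $w_{ij}>0$ iff $(j,i)\in\mathcal{E}$ (self-loops allowed). In the Friedkin–Johnsen model, $\beta=\mathrm{diag}(\beta_1,\dots,\beta_n)$ with $\beta_i\in[0,1]$, and agent $i$ is stubborn if $\beta_i>0$. Here exactly two agents $s_1,s_2$ are stubborn, with $\beta_{s_1},\beta_{s_2}\in(0,1)$. The influence centrality vector is $\mathbf{c}=P^T\mathbb{1}_n/n$ with $P=(I_n-(I_n-\beta)W)^{-1}\beta$; $c_i$ is the influence centrality of agent $i$ (and $c_{s_1}+c_{s_2}=1$). Type $\mathcal{C}^1$: $\mathcal{G}$ is strongly connected and some node $m$ belongs to every cycle of $\mathcal{G}$ other than self-loops; such an $m$ is a global communicator. Given a global communicator $m$, a direct path from $i$ to $j$ is a path from $i$ to $j$ that does not pass through $m$. The nodes are classified as: $\mathcal{T}_1$: nodes having a direct path from $s_1$ but not from $s_2$; $\mathcal{T}_2$: direct path from $s_2$ but not from $s_1$; $\mathcal{T}_3$: direct paths from both; $\mathcal{T}_4$: from neither. By convention $s_1\in\mathcal{T}_1$, $s_2\in\mathcal{T}_2$, $m\in\mathcal{T}_3$, except that if $s_1$ has a direct path to $s_2$ then $s_2$ and every node with a direct path from $s_2$ belong to $\mathcal{T}_3$ (so $\mathcal{T}_2=\emptyset$). Edge modification $(a,b,d)$: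 for distinct nodes $a,b,d$ with $w_{bd}>0$ and some $0<w<w_{bd}$, replace $w_{ba}$ by $w_{ba}+w$ (adding edge $(a,b)$ if absent) and $w_{bd}$ by $w_{bd}-w$, so the in-degree (row sum) of $b$ is unchanged. It is permissible if the modified network is still of type $\mathcal{C}^1$. It is redundant if it changes the influence centrality of neither stubborn agent. *)

(* Defs.v *)
From HB Require Import structures.
From mathcomp Require Import all_boot all_order all_algebra.
Set Implicit Arguments. Unset Strict Implicit. Unset Printing Implicit Defensive.
Import Order.TTheory GRing.Theory Num.Theory.
Local Open Scope ring_scope.

Section FJ.
Variables (R : realFieldType) (n : nat).
Implicit Types (W : 'M[R]_n) (p : seq 'I_n).

Definition row_stochastic W :=
  (forall i j, 0 <= W i j) /\ (forall i, \sum_j W i j = 1).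

(* edge (i,j) of the graph: information flows from i to j, iff w_{ji} > 0 *)
Definition fedge W : rel 'I_n := fun i j => 0 < W j i.

Definition is_walk W i j p := path (fedge W) i p && (last i p == j).

Definition simple_path W i j p := is_walk W i j p && uniq (i :: p).

Definition simple_cycle W (cy : seq 'I_n) :=
  [&& (2 <= size cy)%N, uniq cy & cycle (fedge W) cy].

Definition strongly_connected W := forall i j, exists p, is_walk W i j p.

Definition global_communicator W m :=
  forall cy, simple_cycle W cy -> m \in cy.

Definition typeC1 W :=
  strongly_connected W /\ exists m, global_communicator W m.

Definition direct_path W m i j :=
  exists p, simple_path W i j p /\ m \notin (i :: p).

Definition inT1 W m s1 s2 v :=
  v <> m /\ (v = s1 \/ (v <> s2 /\ direct_path W m s1 v /\ ~ direct_path W m s2 v)).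
Definition inT2 W m s1 s2 v :=
  v <> m /\ ~ direct_path W m s1 s2 /\ v <> s1 /\
  (v = s2 \/ (direct_path W m s2 v /\ ~ direct_path W m s1 v)).
Definition inT3 W m s1 s2 v :=
  v = m \/
  (v <> s1 /\
   ((direct_path W m s1 s2 /\ (v = s2 \/ direct_path W m s2 v)) \/
    (v <> s2 /\ direct_path W m s1 v /\ direct_path W m s2 v))).
Definition inT4 W m s1 s2 v :=
  [/\ v <> m, v <> s1, v <> s2, ~ direct_path W m s1 v & ~ direct_path W m s2 v].

Definition all_paths_through W x y z :=
  forall p, simple_path W x y p -> z \in (x :: p).

Definition equally_neutral W m s1 s2 a d :=
  inT4 W m s1 s2 a /\ inT4 W m s1 s2 d.

Definition equally_supportive W m s1 s2 a d :=
  (inT1 W m s1 s2 a /\ inT1 W m s1 s2 d /\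
   all_paths_through W m a s1 /\ all_paths_through W m d s1) \/
  (inT2 W m s1 s2 a /\ inT2 W m s1 s2 d /\
   all_paths_through W m a s2 /\ all_paths_through W m d s2).

Definition equally_connected W s1 s2 a d :=
  exists c, forall s t, (s = s1 \/ s = s2) -> (t = a \/ t = d) ->
    all_paths_through W s t c.

Definition edge_mod W a b d (w : R) : 'M[R]_n :=
  \matrix_(i, j) if i == b then
                   (if j == a then W i j + w
                    else if j == d then W i j - w else W i j)
                 else W i j.

Definition beta_mx (beta : 'I_n -> R) : 'M[R]_n := diag_mx (\row_i beta i).

Definition FJ_P W (beta : 'I_n -> R) : 'M[R]_n :=
  invmx (1%:M - (1%:M - beta_mx beta) *m W) *m beta_mx beta.

Definition influence_centrality W (beta : 'I_n -> R) i : R :=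
  (\sum_j FJ_P W beta j i) / n%:R.

End FJ.

(* Main.v *)
Require Import Defs.
From HB Require Import structures.
From mathcomp Require Import all_boot all_order all_algebra.
From Stdlib Require Import Classical ClassicalDescription.
Import Order.TTheory GRing.Theory Num.Theory.
Local Open Scope ring_scope.
Set Implicit Arguments. Unset Strict Implicit.

Lemma maxprinc (R : realFieldType) n (W : 'M[R]_n) (g f : 'I_n -> R) (z : 'I_n) :
  row_stochastic W -> strongly_connected W -> (forall v, 0 <= g v <= 1) ->
  (forall v, f v = 0 \/ f v = g v * \sum_j W v j * f j) ->
  (f z = 0 \/ g z < 1) -> forall v, f v = 0.
Proof.
move=> [W0 W1] SC g01 Hf Hz.
have [u _ Hu] := @arg_maxP _ _ _ z predT (fun i => `|f i|) isT.
set M := `|f u| in Hu.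
suff M0 : M = 0.
  by move=> v; apply/normr0_eq0/eqP; rewrite eq_le normr_ge0 andbT -M0; exact: Hu.
apply/eqP; rewrite eq_le normr_ge0 andbT; apply/negP => /negP; rewrite -ltNge => Mpos.
have key : forall v, `|f v| = M -> g v = 1 /\ f v != 0 /\ forall j, 0 < W v j -> `|f j| = M.
  move=> v Hv.
  have fv0 : f v != 0 by rewrite -normr_eq0 Hv gt_eqF.
  have [fv|fv] := Hf v; first by rewrite fv eqxx in fv0.
  set S := \sum_j W v j * f j in fv.
  have HS1 : `|S| <= \sum_j W v j * `|f j|.
    apply: le_trans (ler_norm_sum _ _ _) _; apply: ler_sum => j _.
    by rewrite normrM ger0_norm.
  have HS2 : \sum_j W v j * `|f j| <= M.
    rewrite -[leRHS]mul1r -(W1 v) mulr_suml; apply: ler_sum => j _.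
    by apply: ler_wpM2l => //; apply: Hu.
  have [g0 g1] := andP (g01 v).
  have HM : M <= g v * `|S| by rewrite -Hv fv normrM ger0_norm.
  have HM2 : g v * `|S| <= `|S| by rewrite ler_piMl.
  split; [|split => //].
    apply/eqP; rewrite eq_le g1 /=.
    have : M <= g v * M := le_trans HM (ler_wpM2l g0 (le_trans HS1 HS2)).
    by rewrite ler_pMl.
  have Hsum : \sum_j W v j * (M - `|f j|) = 0.
    apply/eqP; rewrite eq_le; apply/andP; split.
      rewrite (eq_bigr (fun j => W v j * M - W v j * `|f j|)); last by move=> j _; rewrite mulrBr.
      rewrite sumrB -mulr_suml W1 mul1r subr_le0.
      exact: le_trans HM (le_trans HM2 HS1).
    apply: sumr_ge0 => j _; apply: mulr_ge0 => //; rewrite subr_ge0; exact: Hu.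
  move=> j Wj.
  have Hge : forall i, true -> 0 <= W v i * (M - `|f i|).
    move=> i _; apply: mulr_ge0 => //; rewrite subr_ge0; exact: Hu.
  have /eqP := @psumr_eq0P _ _ _ _ Hge Hsum j isT.
  by rewrite mulf_eq0 gt_eqF //= subr_eq0 => /eqP <-.
have prop : forall p x, path (fedge W) x p -> `|f (last x p)| = M -> `|f x| = M.
  elim=> [|y p IH] x //= /andP [exy py] Hl.
  have := key y (IH y py Hl); case=> _ [_ Hy]; exact: Hy.
have [p /andP [pp /eqP lp]] := SC z u.
have Hl : `|f (last z p)| = M by rewrite lp.
have := key z (prop p z pp Hl).
case=> gz [fz0 _]; case: Hz => Hz.
  by rewrite Hz eqxx in fz0.
by rewrite gz ltxx in Hz.
Qed.
Lemma B_entry (R : realFieldType) n (W : 'M[R]_n) beta i j :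
  ((1%:M - beta_mx beta) *m W) i j = (1 - beta i) * W i j.
Proof. by rewrite mulmxBl mul1mx /beta_mx mul_diag_mx !mxE mulrBl mul1r. Qed.

Lemma unit_of_ker (R : realFieldType) n (A : 'M[R]_n) :
  (forall x : 'cV_n, A *m x = 0 -> x = 0) -> A \in unitmx.
Proof.
move=> H; rewrite -unitmx_tr -row_free_unit; apply: inj_row_free => v Hv.
have : A *m v^T = 0 by rewrite -[A]trmxK -trmx_mul Hv trmx0.
by move/H => /(congr1 trmx); rewrite trmxK trmx0.
Qed.

Lemma Bx_entry (R : realFieldType) n (W : 'M[R]_n) beta m (x : 'M[R]_(n, m)) :
  (1%:M - beta_mx beta) *m W *m x =
  \matrix_(i < n, k < m) ((1 - beta i) * \sum_j W i j * x j k).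
Proof.
apply/matrixP => i k; rewrite !mxE mulr_sumr; apply: eq_bigr => j _.
by rewrite B_entry mulrA.
Qed.

Lemma suffix_path (R : realFieldType) n (W : 'M[R]_n) x y p m :
  simple_path W x y p -> m \in x :: p ->
  exists q, simple_path W m y q /\ {subset m :: q <= x :: p}.
Proof.
rewrite in_cons => Hp /orP [/eqP ->|Hm]; first by exists p; split.
move: Hp; case/splitPr: Hm => p1 p2.
rewrite /simple_path /is_walk cat_path last_cat /=.
case/and3P => /andP [/and3P [_ _ pp2] lp] _.
rewrite cat_uniq => /and3P [_ _ /= /andP [m2 u2]].
exists p2; split; first by rewrite pp2 lp m2 u2.
by move=> z zin; rewrite -cat_cons mem_cat zin orbT.
Qed.

Definition Mx (R : realFieldType) n (W : 'M[R]_n) beta :=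
  1%:M - (1%:M - beta_mx beta) *m W.

Lemma row_eq (R : realFieldType) n (W : 'M[R]_n) beta (P : 'M[R]_n) v k :
  Mx W beta *m P = beta_mx beta -> beta v = 0 -> P v k = \sum_j W v j * P j k.
Proof.
move=> /matrixP /(_ v k); rewrite /Mx mulmxBl mul1mx Bx_entry.
rewrite /beta_mx mxE !mxE => H bv; move: H; rewrite bv mul0rn subr0 mul1r.
by move/eqP; rewrite subr_eq0 => /eqP.
Qed.

Lemma Mx_unit (R : realFieldType) n (W : 'M[R]_n) beta s :
  row_stochastic W -> strongly_connected W -> (forall i, 0 <= beta i <= 1) ->
  0 < beta s -> Mx W beta \in unitmx.
Proof.
move=> RS SC b01 bs; apply: unit_of_ker => x Hx.
have Hf : forall v, x v 0 = 0 \/ x v 0 = (1 - beta v) * \sum_j W v j * x j 0.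
  move=> v; right; move/matrixP: Hx => /(_ v 0).
  rewrite /Mx mulmxBl mul1mx Bx_entry !mxE.
  by move/eqP; rewrite subr_eq0 => /eqP.
have g01 : forall v, 0 <= 1 - beta v <= 1.
  by move=> v; have /andP [h1 h2] := b01 v; rewrite subr_ge0 h2 lerBlDr lerDl h1.
have Hz : x s 0 = 0 \/ 1 - beta s < 1 by right; rewrite ltrBlDr ltrDl.
have := maxprinc RS SC g01 Hf Hz.
by move=> H; apply/matrixP => i j; rewrite (ord1 j) H mxE.
Qed.

Lemma harmonic (R : realFieldType) n (W : 'M[R]_n) beta (P : 'M[R]_n) s1 s2 c t :
  row_stochastic W -> strongly_connected W ->
  (forall i, i != s1 -> i != s2 -> beta i = 0) ->
  Mx W beta *m P = beta_mx beta ->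
  (forall s, s = s1 \/ s = s2 -> all_paths_through W s t c) ->
  forall k, P t k = P c k.
Proof.
move=> RS SC bz HP Hall k.
pose A u := exists s, (s = s1 \/ s = s2) /\ exists p, is_walk W s u p /\ c \notin s :: p.
pose Bp u := u != c /\ ~ A u.
have F1 : forall v, Bp v -> v != s1 /\ v != s2.
  move=> v [vc nA]; split; apply/negP => /eqP E; apply: nA; exists v;
    (split; [by rewrite E; auto|]); exists [::];
    by rewrite /is_walk /= eqxx inE eq_sym.
have F2 : forall v j, Bp v -> 0 < W v j -> j = c \/ Bp j.
  move=> v j [vc nA] Wvj; case: (eqVneq j c) => [->|jc]; first by left.
  right; split => // -[s [hs [p [/andP [pp /eqP lp] cp]]]]; apply: nA.
  exists s; split => //; exists (rcons p v); split.
    by rewrite /is_walk rcons_path pp lp last_rcons eqxx /fedge Wvj.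
  by move: cp; rewrite !inE mem_rcons !inE !negb_or (eq_sym c v) vc.
have F3 : t = c \/ Bp t.
  case: (eqVneq t c) => [->|tc]; first by left.
  right; split => // -[s [hs [p [/andP [pp /eqP lp] cp]]]].
  move: lp; case: (shortenP pp) => p' pp' up' sub' lp.
  have := Hall s hs p'; rewrite /simple_path /is_walk pp' up' -lp eqxx => /(_ isT).
  rewrite inE => /orP [/eqP E|/sub' cin]; move: cp; rewrite inE negb_or.
    by rewrite E eqxx.
  by rewrite cin andbF.
pose f u := if excluded_middle_informative (Bp u) then P u k - P c k else 0.
have fE : forall u, Bp u -> f u = P u k - P c k.
  by move=> u hu; rewrite /f; case: excluded_middle_informative.
have f0 : forall u, ~ Bp u -> f u = 0.
  by move=> u hu; rewrite /f; case: excluded_middle_informative.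
have g01 : forall v : 'I_n, 0 <= (fun _ => 1 : R) v <= 1 by move=> v; rewrite /= ler01 lexx.
have Hf : forall v, f v = 0 \/ f v = (fun _ => 1 : R) v * \sum_j W v j * f j.
  move=> v; have [hv|hv] := classic (Bp v); last by left; apply: f0.
  right; rewrite mul1r fE //.
  have [n1 n2] := F1 v hv.
  rewrite (row_eq k HP (bz v n1 n2)).
  have -> : \sum_j W v j * f j = \sum_j W v j * (P j k - P c k).
    apply: eq_bigr => j _; have [RS0 _] := RS.
    have := RS0 v j; rewrite le_eqVlt => /orP [/eqP <-|Wj]; first by rewrite !mul0r.
    case: (F2 v j hv Wj) => [->|hj]; last by rewrite fE.
    by rewrite f0 ?subrr // => -[]; rewrite eqxx.
  have [_ RS1] := RS.
  rewrite [RHS](eq_bigr (fun j => W v j * P j k - W v j * P c k)); last by move=> j _; rewrite mulrBr.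
  by rewrite sumrB -mulr_suml RS1 mul1r.
have Hz : f c = 0 \/ (fun _ => 1 : R) c < 1 by left; apply: f0 => -[]; rewrite eqxx.
have := maxprinc RS SC g01 Hf Hz t.
case: F3 => [->//|ht]; rewrite fE // => /eqP; rewrite subr_eq0 => /eqP //.
Qed.

Definition Emx (R : realFieldType) n (a b d : 'I_n) (w : R) : 'M[R]_n :=
  \matrix_(i, j) (if i == b then (if j == a then w else if j == d then - w else 0) else 0).

Lemma edge_modE (R : realFieldType) n (W : 'M[R]_n) a b d w :
  a != d -> edge_mod W a b d w = W + Emx a b d w.
Proof.
move=> ad; apply/matrixP => i j; rewrite !mxE.
case: (i == b); last by rewrite addr0.
case: (eqVneq j a) => [->|ja] //=.
by case: (j == d); rewrite ?addr0.
Qed.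

Lemma sumE (R : realFieldType) n (a b d : 'I_n) (w : R) (y : 'I_n -> R) i :
  a != d -> \sum_j Emx a b d w i j * y j = if i == b then w * y a - w * y d else 0.
Proof.
move=> ad; case: (eqVneq i b) => [->|ib].
  rewrite (bigD1 a) //= (bigD1 d) 1?eq_sym //= big1; last first.
    by move=> j /andP [ja jd]; rewrite mxE eqxx (negPf ja) (negPf jd) mul0r.
  by rewrite !mxE eqxx (negPf ad) eq_sym (negPf ad) eqxx addr0 eqxx mulNr.
by rewrite big1 // => j _; rewrite mxE (negPf ib) mul0r.
Qed.

Lemma through_m (R : realFieldType) n (W : 'M[R]_n) m s t :
  ~ direct_path W m s t -> all_paths_through W s t m.
Proof.
move=> nd p sp; apply/negPn/negP => hm; apply: nd; by exists p.
Qed.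

Lemma through_last (R : realFieldType) n (W : 'M[R]_n) s t :
  all_paths_through W s t t.
Proof. by move=> p /andP [/andP [_ /eqP <-] _]; apply: mem_last. Qed.

Lemma through_head (R : realFieldType) n (W : 'M[R]_n) s t :
  all_paths_through W s t s.
Proof. by move=> p _; apply: mem_head. Qed.

Lemma through_via (R : realFieldType) n (W : 'M[R]_n) s t m c :
  all_paths_through W s t m -> all_paths_through W m t c -> all_paths_through W s t c.
Proof.
move=> H1 H2 p sp; have [q [sq sub]] := suffix_path sp (H1 p sp).
exact: sub (H2 q sq).
Qed.

Unset Implicit Arguments. Set Strict Implicit.

Theorem theorem1 (R : realFieldType) (n : nat) (W : 'M[R]_n)
  (beta : 'I_n -> R) (s1 s2 a b d : 'I_n) (w : R) :
  row_stochastic W ->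
  typeC1 W ->
  (forall i, 0 <= beta i <= 1) ->
  s1 != s2 ->
  0 < beta s1 < 1 -> 0 < beta s2 < 1 ->
  (forall i, i != s1 -> i != s2 -> beta i = 0) ->
  a != b -> b != d -> a != d ->
  0 < W b d -> 0 < w < W b d ->
  typeC1 (edge_mod W a b d w) ->
  (exists m, global_communicator W m /\
     (equally_neutral W m s1 s2 a d \/
      equally_supportive W m s1 s2 a d \/
      equally_connected W s1 s2 a d)) ->
  influence_centrality (edge_mod W a b d w) beta s1 = influence_centrality W beta s1 /\
  influence_centrality (edge_mod W a b d w) beta s2 = influence_centrality W beta s2.
Proof.
move=> RS [SC _] b01 s12 /andP [bs1 _] _ bz ab bd ad Wbd /andP [w0 wW] [SC' _] [m [_ Hcond]].
have [c Hc] : exists c, forall s t, s = s1 \/ s = s2 -> t = a \/ t = d ->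
    all_paths_through W s t c.
  case: Hcond => [[[_ _ _ a1 a2] [_ _ _ d1 d2]]|[Hs|Hc]]; last by [].
    exists m => s t [->|->] [->|->]; exact: through_m.
  case: Hs => [[Ha [Hd [Ha' Hd']]]|[Ha [Hd [Ha' Hd']]]].
    exists s1 => s t [->|->] ht; first exact: through_head.
    have [Ht Ht'] : inT1 W m s1 s2 t /\ all_paths_through W m t s1.
      by case: ht => ->.
    case: Ht => _ [->|[_ [_ nd]]]; first exact: through_last.
    exact: through_via (through_m nd) Ht'.
  exists s2 => s t [->|->] ht; last exact: through_head.
  have [Ht Ht'] : inT2 W m s1 s2 t /\ all_paths_through W m t s2.
    by case: ht => ->.
  case: Ht => _ [_ [_ [->|[_ nd]]]]; first exact: through_last.
  exact: through_via (through_m nd) Ht'.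
pose W' := edge_mod W a b d w.
have RS' : row_stochastic W'.
  have [RS0 RS1] := RS; split.
    move=> i j; rewrite /W' !mxE; case: (eqVneq i b) => [->|_] //.
    case: (j == a); first by rewrite addr_ge0 // ltW.
    case: (eqVneq j d) => [->|_] //; by rewrite subr_ge0 ltW.
  move=> i; rewrite /W' edge_modE //.
  rewrite (eq_bigr (fun j => W i j + Emx a b d w i j * 1)); last by move=> j _; rewrite mxE mulr1.
  by rewrite big_split /= RS1 sumE // mulr1 subrr; case: (i == b); rewrite addr0.
have U := Mx_unit RS SC b01 bs1.
have U' := Mx_unit RS' SC' b01 bs1.
pose P := FJ_P W beta.
have HP : Mx W beta *m P = beta_mx beta by rewrite /P /FJ_P mulKVmx.
have Hcol : forall k, P a k = P d k.
  move=> k; rewrite (harmonic RS SC bz HP (fun s hs => Hc s a hs (or_introl erefl)) k).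
  by rewrite (harmonic RS SC bz HP (fun s hs => Hc s d hs (or_intror erefl)) k).
have HP' : Mx W' beta *m P = beta_mx beta.
  rewrite -HP /Mx /W' edge_modE //; set D := 1%:M - beta_mx beta.
  rewrite mulmxDr opprD addrA [in LHS]mulmxBl.
  suff -> : D *m Emx a b d w *m P = 0 by rewrite subr0.
  rewrite -mulmxA; suff -> : Emx a b d w *m P = 0 by rewrite mulmx0.
  apply/matrixP => i k; rewrite !mxE.
  by rewrite sumE // Hcol subrr; case: (i == b).
have E : FJ_P (edge_mod W a b d w) beta = P.
  transitivity (invmx (Mx W' beta) *m (Mx W' beta *m P)); first by rewrite HP'.
  by rewrite mulKmx.
by rewrite /influence_centrality E.
Qed.
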